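(* Let $\alpha\in(0,1)$, $m\ge1$, $a_0,\dots,a_{m-1}\in\mathbb{C}$, and let $\mathcal{S}$ be the set of solutions $x$ of $${}^LD^{m\circ\alpha}x(t)+a_{m-1}{}^LD^{(m-1)\circ\alpha}x(t)+\dots+a_1{}^LD^\alpha x(t)+a_0x(t)=0 .$$ Then $\mathcal{S}$ is a complex vector space of dimension $m$, and the map $x\mapsto(x(0),{}^LD^\alpha x(0),\dots,{}^LD^{(m-1)\circ\alpha}x(0))$ is an isomorphism $\mathcal{S}\to\mathbb{C}^m$.
   Context: Solutions are taken among functions $x:[0,\infty)\to\mathbb{C}$ given by power series $\sum_nx_nt^n$ convergent for all $t\ge0$, the equation holding for every $t\ge0$. L-fractional derivative: ${}^LD^\alpha x(t)=\frac{\Gamma(2-\alpha)}{t^{1-\alpha}}\cdot\frac{1}{\Gamma(1-\alpha)}\int_0^t (t-\tau)^{-\alpha}x'(\tau)d\tau$ for $t>0$; on such power series it acts termwise, ${}^LD^\alpha\sum_nx_nt^n=\sum_nx_{n+1}\frac{\Gamma(n+2)\Gamma(2-\alpha)}{\Gamma(n+2-\alpha)}t^n$, which also defines its value at $t=0$. ${}^LD^{k\circ\alpha}$ is the $k$-fold composition of ${}^LD^\alpha$. *)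

(* Defs.v *)
From Stdlib Require Import Reals List.
From Coquelicot Require Import Coquelicot.
Open Scope R_scope.

Definition Gamma (x : R) : R :=
  RInt_gen (fun t => Rpower t (x - 1) * exp (- t)) (at_right 0) (Rbar_locally p_infty).

(* Sum of a complex series (meaningful when the series converges). *)
Definition CSeries (a : nat -> C) : C :=
  (Series (fun n => Re (a n)), Series (fun n => Im (a n))).

Definition psum (c : nat -> C) (t : R) : C :=
  CSeries (fun n => (RtoC (t ^ n) * c n)%C).

Definition conv_on_nonneg (c : nat -> C) : Prop :=
  forall t : R, 0 <= t -> ex_series (fun n => (RtoC (t ^ n) * c n)%C).

(* L-fractional derivative acting termwise on coefficients:
   LD^alpha sum_n x_n t^n = sum_n x_{n+1} Gamma(n+2)Gamma(2-alpha)/Gamma(n+2-alpha) t^n. *)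
Definition LD (alpha : R) (c : nat -> C) : nat -> C :=
  fun n => (RtoC (Gamma (INR n + 2) * Gamma (2 - alpha) / Gamma (INR n + 2 - alpha))
            * c (S n))%C.

Definition LDk (alpha : R) (k : nat) (c : nat -> C) : nat -> C :=
  Nat.iter k (LD alpha) c.

Definition IsSolution (alpha : R) (m : nat) (a : nat -> C) (c : nat -> C) : Prop :=
  conv_on_nonneg c /\
  forall t : R, 0 <= t ->
    (psum (LDk alpha m c) t
     + fold_right Cplus 0%C
         (map (fun j => a j * psum (LDk alpha j c) t) (seq 0 m)))%C = 0%C.

Definition init_val (alpha : R) (k : nat) (c : nat -> C) : C :=
  psum (LDk alpha k c) 0.

(* Main.v *)
Require Import Defs.
From Stdlib Require Import Reals Lra Lia List Arith FunctionalExtensionality.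
From Coquelicot Require Import Coquelicot.
Open Scope R_scope.

Definition gf (y t : R) := Rpower t y * exp (- t).

Lemma gf_cont y t : 0 < t -> continuous (gf y) t.
Proof. intros Ht. apply (@ex_derive_continuous R_AbsRing R_NormedModule). unfold gf, Rpower. auto_derive. lra. Qed.

Lemma gf_exRInt y a b : 0 < a -> a <= b -> ex_RInt (gf y) a b.
Proof. intros Ha Hab. apply (@ex_RInt_continuous R_CompleteNormedModule). intros z Hz.
  rewrite Rmin_left in Hz by lra. rewrite Rmax_right in Hz by lra. apply gf_cont; lra. Qed.

Lemma gf_pos y t : 0 < gf y t.
Proof. unfold gf, Rpower. apply Rmult_lt_0_compat; apply exp_pos. Qed.

Lemma RInt_gf_mono y a b a' b' : 0 < a' -> a' <= a -> a <= b -> b <= b' ->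
  RInt (gf y) a b <= RInt (gf y) a' b'.
Proof. intros H1 H2 H3 H4.
  rewrite <- (RInt_Chasles (gf y) a' a b') by (apply gf_exRInt; lra).
  rewrite <- (RInt_Chasles (gf y) a b b') by (apply gf_exRInt; lra).
  assert (0 <= RInt (gf y) a' a).
  { apply RInt_ge_0; [lra| apply gf_exRInt; lra | intros; apply Rlt_le, gf_pos]. }
  assert (0 <= RInt (gf y) b b').
  { apply RInt_ge_0; [lra| apply gf_exRInt; lra | intros; apply Rlt_le, gf_pos]. }
  simpl in *. unfold plus; simpl. lra. Qed.

Lemma gamma_sup (x K : R) :
  (forall a b, 0 < a -> a <= b -> RInt (gf (x-1)) a b <= K) ->
  (forall a b, 0 < a -> a <= b -> RInt (gf (x-1)) a b <= Gamma x) /\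
  (forall K', (forall a b, 0 < a -> a <= b -> RInt (gf (x-1)) a b <= K') -> Gamma x <= K').
Proof.
  intros HK.
  set (E := fun z => exists a b, 0 < a /\ a <= b /\ z = RInt (gf (x-1)) a b).
  assert (HB : bound E). { exists K. intros z [a [b [H1 [H2 ->]]]]. apply HK; auto. }
  assert (HE : exists z, E z). { exists (RInt (gf (x-1)) 1 1). exists 1, 1. repeat split; lra. }
  destruct (completeness E HB HE) as [L [HL1 HL2]].
  assert (HG : Gamma x = L).
  { unfold Gamma. change (fun t => Rpower t (x - 1) * exp (- t)) with (gf (x-1)).
    apply is_RInt_gen_unique.
    intros P [eps Heps].
    assert (Hlt : L - eps < L) by (destruct eps; simpl; lra).
    destruct (Rlt_le_dec (L-eps) L) as [_|]; [|lra].
    assert (Hex : exists a0 b0, 0 < a0 /\ a0 <= b0 /\ L - eps < RInt (gf (x-1)) a0 b0).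
    { apply Classical_Prop.NNPP. intro Hn. assert (HL : is_upper_bound E (L - eps)).
      { intros z [a [b [H1 [H2 ->]]]]. apply Rnot_lt_le. intro. apply Hn. exists a, b. auto. }
      specialize (HL2 _ HL). lra. }
    destruct Hex as [a0 [b0 [Ha0 [Hab0 Hlt0]]]].
    exists (fun a => 0 < a < a0) (fun b => b0 < b).
    - exists (mkposreal a0 Ha0). intros y Hy Hy0. split; auto.
      unfold ball in Hy; simpl in Hy; unfold AbsRing_ball, abs, minus, plus, opp in Hy; simpl in Hy.
      apply Rabs_def2 in Hy. lra.
    - exists b0. intros y Hy. exact Hy.
    - intros a b [Ha1 Ha2] Hb. exists (RInt (gf (x-1)) a b). simpl. split.
      + apply RInt_correct, gf_exRInt; lra.
      + apply Heps. assert (RInt (gf (x-1)) a0 b0 <= RInt (gf (x-1)) a b) by (apply RInt_gf_mono; lra).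
        assert (RInt (gf (x-1)) a b <= L) by (apply HL1; exists a, b; repeat split; lra).
        unfold ball; simpl; unfold AbsRing_ball, abs, minus, plus, opp; simpl.
        apply Rabs_def1; lra. }
  rewrite HG. split.
  - intros a b Ha Hab. apply HL1. exists a, b. auto.
  - intros K' HK'. apply HL2. intros z [a [b [H1 [H2 ->]]]]. apply HK'; auto.
Qed.

Lemma exp_le x y : x <= y -> exp x <= exp y.
Proof. intros H. destruct (Req_dec x y). subst; lra. apply Rlt_le, exp_increasing; lra. Qed.

Lemma ln_le' x y : 0 < x -> x <= y -> ln x <= ln y.
Proof. intros H0 H. destruct (Req_dec x y). subst; lra. apply Rlt_le, ln_increasing; lra. Qed.

Lemma exp_pow_nat (x : R) (k : nat) : exp x ^ k = exp (INR k * x).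
Proof. induction k. simpl. rewrite Rmult_0_l, exp_0; auto.
  rewrite S_INR. simpl. rewrite IHk, <- exp_plus. f_equal; ring. Qed.

Lemma pow_le_exp (k : nat) (t : R) : (1 <= k)%nat -> 0 < t -> t ^ k <= (2 * INR k) ^ k * exp (t/2).
Proof. intros Hk Ht.
  assert (HK : 1 <= INR k) by (apply (le_INR 1); auto).
  assert (H1 : t <= 2 * INR k * exp (t / (2 * INR k))).
  { pose proof (exp_ineq1_le (t / (2 * INR k))).
    assert (t / (2 * INR k) < exp (t / (2 * INR k))) by lra.
    apply (Rmult_le_reg_r (/(2 * INR k))). apply Rinv_0_lt_compat; lra.
    replace (2 * INR k * exp (t / (2 * INR k)) * / (2 * INR k)) with (exp (t / (2 * INR k))) by (field; lra).
    unfold Rdiv in H0. lra. }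
  replace (exp (t/2)) with (exp (t / (2 * INR k)) ^ k).
  rewrite <- Rpow_mult_distr. apply pow_incr. lra.
  rewrite exp_pow_nat. f_equal. field. lra. Qed.

Lemma int_exp_bound (k a b : R) : 0 < k -> a <= b -> 0 <= a ->
  ex_RInt (fun t => exp (- (k * t))) a b /\ RInt (fun t => exp (- (k * t))) a b <= / k.
Proof. intros Hk Hab Ha.
  assert (H : is_RInt (fun t => exp (- (k * t))) a b (minus ((fun t => - exp (- (k*t)) / k) b) ((fun t => - exp (- (k*t)) / k) a))).
  { apply (@is_RInt_derive R_CompleteNormedModule (fun t => - exp (- (k*t)) / k)).
    - intros x _. auto_derive. auto. field. lra.
    - intros x _. apply (@ex_derive_continuous R_AbsRing R_NormedModule). auto_derive. auto. }
  split. eexists; eauto.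
  apply (@is_RInt_unique R_CompleteNormedModule) in H. rewrite H. unfold minus, plus, opp; simpl.
  pose proof (exp_pos (- (k*b))). pose proof (exp_pos (- (k*a))).
  assert (exp (- (k*a)) <= 1). { rewrite <- exp_0. apply exp_le. nra. }
  apply (Rmult_le_reg_r k); auto. field_simplify; try lra. Qed.

Lemma Rpower_le_1 (t y : R) : 0 < t <= 1 -> 0 <= y -> Rpower t y <= 1.
Proof. intros Ht Hy. unfold Rpower. rewrite <- exp_0. apply exp_le.
  assert (ln t <= 0). { rewrite <- ln_1. apply ln_le'; lra. }
  nra. Qed.

Lemma gf_int_bound (y M a b : R) : (forall t, 0 < t -> Rpower t y <= M * exp (t/2)) ->
  0 < a -> a <= b -> RInt (gf y) a b <= 2 * M.
Proof. intros HM Ha Hab.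
  assert (HM0 : 0 <= M). { specialize (HM 1 Rlt_0_1). pose proof (exp_pos (1/2)).
    pose proof (exp_pos (y * ln 1)). unfold Rpower in HM. nra. }
  destruct (int_exp_bound (1/2) a b) as [He Hb]; try lra.
  apply Rle_trans with (RInt (fun t => M * exp (- (1/2 * t))) a b).
  - apply RInt_le; auto. apply gf_exRInt; auto.
    apply (ex_RInt_scal (V := R_NormedModule) _ a b M) in He. exact He.
    intros x Hx. unfold gf. specialize (HM x ltac:(lra)).
    replace (exp (- (1/2 * x))) with (exp (x/2) * exp (- x)).
    pose proof (exp_pos (-x)). nra.
    rewrite <- exp_plus. f_equal. lra.
  - change (fun t => M * exp (- (1/2 * t))) with (fun t => scal M (exp (- (1/2 * t)))).
    rewrite (@RInt_scal R_CompleteNormedModule) by auto. unfold scal; simpl; unfold mult; simpl.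
    replace (2 * M) with (M * / (1/2)) by field. apply Rmult_le_compat_l; auto. Qed.

Lemma Rpower_ge_1 t y : 1 <= t -> 0 <= y -> 1 <= Rpower t y.
Proof. intros. rewrite <- (Rpower_O t) by lra. apply Rle_Rpower; lra. Qed.

Lemma Rpower_bound y : 0 <= y -> exists M, forall t, 0 < t -> Rpower t y <= M * exp (t/2).
Proof. intros Hy. destruct (INR_unbounded y) as [k0 Hk0].
  set (k := S k0). exists (1 + (2 * INR k) ^ k). intros t Ht.
  assert (He : 1 <= exp (t/2)). { rewrite <- exp_0. apply exp_le. lra. }
  assert (Hp : 0 <= (2 * INR k) ^ k). { apply pow_le. pose proof (pos_INR k). lra. }
  destruct (Rle_dec t 1).
  - pose proof (Rpower_le_1 t y ltac:(lra) Hy). nra.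
  - apply Rle_trans with (t ^ k).
    + rewrite <- Rpower_pow by lra. apply Rle_Rpower. lra. unfold k. rewrite S_INR. lra.
    + pose proof (pow_le_exp k t ltac:(unfold k; lia) Ht). nra. Qed.

Lemma gamma_bdd x : 1 <= x -> exists K, forall a b, 0 < a -> a <= b -> RInt (gf (x-1)) a b <= K.
Proof. intros Hx. destruct (Rpower_bound (x-1)) as [M HM]. lra.
  exists (2 * M). intros. apply gf_int_bound; auto. Qed.

Lemma gamma_lb x a b c : 1 <= x -> 0 < a -> a <= b ->
  (forall t, a <= t <= b -> c <= gf (x-1) t) -> c * (b - a) <= Gamma x.
Proof. intros Hx Ha Hab Hc. destruct (gamma_bdd x Hx) as [K HK].
  destruct (gamma_sup x K HK) as [H1 _].
  apply Rle_trans with (RInt (gf (x-1)) a b); [|apply H1; auto].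
  replace (c * (b - a)) with (RInt (fun _ => c) a b).
  apply RInt_le; auto. apply ex_RInt_const. apply gf_exRInt; auto.
  intros; apply Hc; lra.
  rewrite (@RInt_const R_CompleteNormedModule). unfold scal; simpl; unfold mult; simpl. ring. Qed.

Lemma gamma_ub x K : 1 <= x -> (forall a b, 0 < a -> a <= b -> RInt (gf (x-1)) a b <= K) -> Gamma x <= K.
Proof. intros Hx HK. destruct (gamma_sup x K HK) as [_ H2]. apply H2; auto. Qed.

Lemma gamma_le_int x a b : 1 <= x -> 0 < a -> a <= b -> RInt (gf (x-1)) a b <= Gamma x.
Proof. intros Hx. destruct (gamma_bdd x Hx) as [K HK].
  destruct (gamma_sup x K HK) as [H1 _]. apply H1. Qed.

Lemma gamma_pos x : 1 <= x -> 0 < Gamma x.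
Proof. intros Hx. apply Rlt_le_trans with (exp (-2) * (2 - 1)).
  pose proof (exp_pos (-2)). lra.
  apply gamma_lb; try lra. intros t Ht. unfold gf.
  pose proof (Rpower_ge_1 t (x-1) ltac:(lra) ltac:(lra)).
  assert (exp (-2) <= exp (-t)) by (apply exp_le; lra). pose proof (exp_pos (-2)). nra. Qed.

Lemma pow2_ge n : INR n + 1 <= 2 ^ n.
Proof. induction n. simpl; lra. rewrite S_INR. simpl.
  assert (1 <= 2 ^ n) by (apply pow_R1_Rle; lra). lra. Qed.

Lemma gf_nat n t : 0 < t -> gf (INR n + 2 - 1) t = t ^ (S n) * exp (- t).
Proof. intros Ht. unfold gf. rewrite <- Rpower_pow by auto. f_equal. f_equal. rewrite S_INR. ring. Qed.

Lemma Gn_ub n : Gamma (INR n + 2) <= 2 * (2 * INR (S n)) ^ (S n).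
Proof. assert (Hn := pos_INR n). apply gamma_ub. lra.
  intros a b Ha Hab. apply gf_int_bound; auto. intros t Ht.
  replace (INR n + 2 - 1) with (INR (S n)) by (rewrite S_INR; ring).
  rewrite Rpower_pow by auto. apply pow_le_exp; auto. lia. Qed.

Lemma Gn_lb n : (INR n + 1) ^ (S n) * exp (- (INR n + 2)) <= Gamma (INR n + 2).
Proof. assert (Hn := pos_INR n).
  replace ((INR n + 1) ^ (S n) * exp (- (INR n + 2))) with ((INR n + 1) ^ (S n) * exp (- (INR n + 2)) * ((INR n + 2) - (INR n + 1))) by ring.
  apply gamma_lb; try lra. intros t Ht. rewrite gf_nat by lra.
  apply Rmult_le_compat. apply pow_le; lra. apply Rlt_le, exp_pos.
  apply pow_incr; lra. apply exp_le; lra. Qed.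

Lemma Gna_lb n alpha : 0 < alpha < 1 ->
  (INR n + 1) ^ n * exp (- (INR n + 2)) <= Gamma (INR n + 2 - alpha).
Proof. intros Ha. assert (Hn := pos_INR n).
  replace ((INR n + 1) ^ n * exp (- (INR n + 2))) with ((INR n + 1) ^ n * exp (- (INR n + 2)) * ((INR n + 2) - (INR n + 1))) by ring.
  apply gamma_lb; try lra. intros t Ht. unfold gf.
  apply Rmult_le_compat. apply pow_le; lra. apply Rlt_le, exp_pos.
  apply Rle_trans with (t ^ n). apply pow_incr; lra.
  rewrite <- Rpower_pow by lra. apply Rle_Rpower; lra. apply exp_le; lra. Qed.

Lemma Gna_ub n alpha T : 0 < alpha < 1 -> 1 <= T ->
  Gamma (INR n + 2 - alpha) <= T ^ (S n) + Rpower T (- alpha) * Gamma (INR n + 2).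
Proof. intros Ha HT. assert (Hn := pos_INR n).
  assert (HR : 0 < Rpower T (- alpha)) by apply exp_pos.
  assert (HTn : 0 <= T ^ S n) by (apply pow_le; lra).
  apply gamma_ub. lra. intros a b H0 Hab.
  destruct (int_exp_bound 1 a b) as [He Hb]; try lra.
  assert (He' : ex_RInt (fun t => exp (- t)) a b).
  { eapply ex_RInt_ext; [|exact He]. intros; simpl. rewrite Rmult_1_l; auto. }
  assert (Hb' : RInt (fun t => exp (- t)) a b <= 1).
  { rewrite (RInt_ext _ (fun t => exp (- (1 * t)))). lra. intros; rewrite Rmult_1_l; auto. }
  apply Rle_trans with (RInt (fun t => plus (scal (T ^ S n) (exp (- t))) (scal (Rpower T (- alpha)) (gf (INR n + 2 - 1) t))) a b).
  - apply RInt_le; auto. apply gf_exRInt; auto.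
    apply (@ex_RInt_plus R_NormedModule). apply (@ex_RInt_scal R_NormedModule); auto.
    apply (@ex_RInt_scal R_NormedModule); apply gf_exRInt; auto.
    intros t Ht. unfold plus, scal; simpl; unfold mult; simpl. rewrite gf_nat by lra. unfold gf.
    pose proof (exp_pos (-t)).
    assert (Hp : Rpower t (INR n + 2 - alpha - 1) <= T ^ S n + Rpower T (- alpha) * t ^ S n).
    { destruct (Rle_dec t T).
      - assert (Rpower t (INR n + 2 - alpha - 1) <= T ^ S n).
        { destruct (Rle_dec t 1).
          - pose proof (Rpower_le_1 t (INR n + 2 - alpha - 1) ltac:(lra) ltac:(lra)).
            assert (1 <= T ^ S n) by (apply pow_R1_Rle; lra). lra.
          - apply Rle_trans with (Rpower T (INR n + 2 - alpha - 1)).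
            apply Rle_Rpower_l; lra.
            rewrite <- Rpower_pow by lra. apply Rle_Rpower; try lra. rewrite S_INR; lra. }
        assert (0 <= Rpower T (- alpha) * t ^ S n). { apply Rmult_le_pos. lra. apply pow_le; lra. }
        lra.
      - replace (INR n + 2 - alpha - 1) with (- alpha + INR (S n)) by (rewrite S_INR; ring).
        rewrite Rpower_plus, Rpower_pow by lra.
        assert (Rpower t (- alpha) <= Rpower T (- alpha)).
        { rewrite !Rpower_Ropp. apply Rinv_le_contravar. apply exp_pos. apply Rle_Rpower_l; lra. }
        assert (0 <= t ^ S n) by (apply pow_le; lra). nra. }
    change (T * T ^ n) with (T ^ S n). apply Rle_trans with ((T ^ S n + Rpower T (- alpha) * t ^ S n) * exp (-t)). apply Rmult_le_compat_r; lra. right; ring.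
  - rewrite (@RInt_plus R_CompleteNormedModule).
    rewrite !(@RInt_scal R_CompleteNormedModule). unfold plus, scal; simpl; unfold mult; simpl.
    assert (RInt (gf (INR n + 2 - 1)) a b <= Gamma (INR n + 2)) by (apply gamma_le_int; lra).
    change (T * T ^ n) with (T ^ S n).
    assert (Hx: T ^ S n * RInt (fun x => exp (-x)) a b <= T ^ S n * 1) by (apply Rmult_le_compat_l; lra).
    assert (Hy : Rpower T (-alpha) * RInt (gf (INR n + 2 - 1)) a b <= Rpower T (-alpha) * Gamma (INR n + 2)) by (apply Rmult_le_compat_l; lra).
    lra.
    apply gf_exRInt; lra. exact He'.
    apply (@ex_RInt_scal R_NormedModule); exact He'.
    apply (@ex_RInt_scal R_NormedModule); apply gf_exRInt; lra. Qed.

Definition gcoef (alpha : R) (n : nat) : R :=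
  Gamma (INR n + 2) * Gamma (2 - alpha) / Gamma (INR n + 2 - alpha).

Lemma gcoef_pos alpha n : 0 < alpha < 1 -> 0 < gcoef alpha n.
Proof. intros Ha. assert (Hn := pos_INR n). unfold gcoef.
  pose proof (gamma_pos (INR n + 2) ltac:(lra)). pose proof (gamma_pos (2 - alpha) ltac:(lra)).
  pose proof (gamma_pos (INR n + 2 - alpha) ltac:(lra)).
  apply Rdiv_lt_0_compat; auto. apply Rmult_lt_0_compat; auto. Qed.

Lemma exp_id n : exp 1 ^ 2 * exp 1 ^ n * exp (- (INR n + 2)) = 1.
Proof. rewrite !exp_pow_nat, <- !exp_plus. transitivity (exp 0); [|apply exp_0]. f_equal. replace (INR 2) with 2 by (simpl; ring). ring. Qed.

Lemma gcoef_bound alpha : 0 < alpha < 1 -> exists A B, 0 < A /\ 0 < B /\ forall n, gcoef alpha n <= A * B ^ n.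
Proof. intros Ha. set (G2 := Gamma (2 - alpha)). assert (HG2 : 0 < G2) by (apply gamma_pos; lra).
  set (E := exp 1). assert (HE : 0 < E) by apply exp_pos.
  exists (4 * E ^ 2 * G2), (4 * E). split. apply Rmult_lt_0_compat; auto. nra. split. lra.
  intros n. assert (Hn := pos_INR n).
  assert (H1 : Gamma (INR n + 2) <= 4 * 4 ^ n * (INR n + 1) ^ n).
  { apply Rle_trans with (1 := Gn_ub n). rewrite S_INR. simpl.
    rewrite Rpow_mult_distr. pose proof (pow2_ge n).
    assert (0 <= (INR n + 1) ^ n) by (apply pow_le; lra).
    assert (0 <= 2 ^ n) by (apply pow_le; lra).
    replace (4 ^ n) with (2 ^ n * 2 ^ n) by (rewrite <- Rpow_mult_distr; f_equal; lra).
    assert ((INR n + 1) * (2 ^ n * (INR n + 1) ^ n) <= 2 ^ n * (2 ^ n * (INR n + 1) ^ n)) by (apply Rmult_le_compat_r; [apply Rmult_le_pos|]; lra). lra. }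
  pose proof (Gna_lb n alpha Ha) as H2.
  pose proof (gamma_pos (INR n + 2 - alpha) ltac:(lra)) as H3.
  unfold gcoef. fold G2.
  apply (Rmult_le_reg_r (Gamma (INR n + 2 - alpha))); auto.
  unfold Rdiv. rewrite Rmult_assoc, Rinv_l, Rmult_1_r by lra.
  apply Rle_trans with (4 * 4 ^ n * (INR n + 1) ^ n * G2). nra.
  replace (4 * 4 ^ n * (INR n + 1) ^ n * G2) with
    (4 * E ^ 2 * G2 * (4 * E) ^ n * ((INR n + 1) ^ n * exp (- (INR n + 2)))).
  apply Rmult_le_compat_l; auto. apply Rmult_le_pos. nra. apply pow_le; nra.
  rewrite Rpow_mult_distr. pose proof (exp_id n). fold E in H. 
  transitivity (4 * 4 ^ n * (INR n + 1) ^ n * G2 * (E ^ 2 * E ^ n * exp (- (INR n + 2)))).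
  ring. rewrite H; ring. Qed.

Lemma gcoef_inf alpha : 0 < alpha < 1 -> forall L, exists N, forall n, (N <= n)%nat -> L <= gcoef alpha n.
Proof. intros Ha L. set (G2 := Gamma (2 - alpha)). assert (HG2 : 0 < G2) by (apply gamma_pos; lra).
  set (M := Rmax 1 (2 * L / G2)).
  assert (HM1 : 1 <= M) by apply Rmax_l. assert (HM2 : 2 * L / G2 <= M) by apply Rmax_r.
  set (T := Rpower M (/ alpha)).
  assert (HT : 1 <= T) by (apply Rpower_ge_1; auto; apply Rlt_le, Rinv_0_lt_compat; lra).
  assert (HTa : Rpower T (- alpha) = / M).
  { unfold T. rewrite Rpower_mult. replace (/ alpha * - alpha) with (- (1)) by (field; lra).
    rewrite Rpower_Ropp, Rpower_1; lra. }
  set (E := exp 1). assert (HE : 1 < E) by (unfold E; pose proof (exp_ineq1_le 1); lra).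
  destruct (INR_unbounded (2 * E * T + M * E)) as [N HN]. exists N. intros n Hn.
  assert (HnN : INR N <= INR n) by (apply le_INR; auto).
  assert (Hn0 := pos_INR n).
  pose proof (Gna_ub n alpha T Ha HT) as H1. rewrite HTa in H1.
  pose proof (Gn_lb n) as H2.
  pose proof (gamma_pos (INR n + 2 - alpha) ltac:(lra)) as H3.
  pose proof (gamma_pos (INR n + 2) ltac:(lra)) as H4.
  assert (HK : M * T ^ S n <= Gamma (INR n + 2)).
  { apply Rle_trans with (2 := H2).
    assert (HTS : 0 <= T ^ S n) by (apply pow_le; lra).
    assert (H5 : (2 * E * T) ^ S n <= (INR n + 1) ^ S n) by (apply pow_incr; nra).
    rewrite !Rpow_mult_distr in H5.
    pose proof (pow2_ge (S n)) as H6. rewrite S_INR in H6.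
    assert (HES : 0 <= E ^ S n) by (apply pow_le; lra).
    (* (n+1)^{n+1} exp(-(n+2)) >= 2^{n+1} E^{n+1} T^{n+1} exp(-(n+2)) >= (n+1) E^{n+1} T^{n+1} exp(-(n+2)) *)
    assert (Hid : E ^ S n * exp (- (INR n + 2)) = / E).
    { pose proof (exp_id n). fold E in H. simpl. simpl in H.
      apply (Rmult_eq_reg_l E); [|lra]. rewrite Rinv_r by lra. rewrite <- H. ring. }
    pose proof (exp_pos (- (INR n + 2))) as Hex.
    apply Rle_trans with (2 ^ S n * E ^ S n * T ^ S n * exp (- (INR n + 2))).
    2: { apply Rmult_le_compat_r; lra. }
    replace (2 ^ S n * E ^ S n * T ^ S n * exp (- (INR n + 2))) with (2 ^ S n * T ^ S n / E)
      by (unfold Rdiv; rewrite <- Hid; ring).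
    apply (Rmult_le_reg_r E); [lra|]. replace (2 ^ S n * T ^ S n / E * E) with (2 ^ S n * T ^ S n) by (field; lra).
    assert (0 <= 2 * E * T) by nra. assert (M * E <= 2 ^ S n) by lra. replace (M * T ^ S n * E) with ((M * E) * T ^ S n) by ring. apply Rmult_le_compat_r; lra. }
  destruct (Rle_dec L 0).
  { apply Rle_trans with 0; auto. apply Rlt_le, gcoef_pos; auto. }
  unfold gcoef. fold G2.
  apply (Rmult_le_reg_r (Gamma (INR n + 2 - alpha))); auto.
  unfold Rdiv. rewrite Rmult_assoc, Rinv_l, Rmult_1_r by lra.
  apply Rle_trans with (L * (T ^ S n + / M * Gamma (INR n + 2))). apply Rmult_le_compat_l; lra.
  assert (HLM : L * / M <= G2 / 2).
  { apply (Rmult_le_reg_r M); [lra|]. rewrite Rmult_assoc, Rinv_l, Rmult_1_r by lra.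
    apply (Rmult_le_reg_r (2 / G2)). apply Rdiv_lt_0_compat; lra.
    replace (G2 / 2 * M * (2 / G2)) with M by (field; lra). lra. }
  assert (HLT : L * T ^ S n <= G2 / 2 * Gamma (INR n + 2)).
  { apply Rle_trans with (L * (Gamma (INR n + 2) / M)).
    apply Rmult_le_compat_l; [lra|]. apply (Rmult_le_reg_r M); [lra|].
    unfold Rdiv. rewrite Rmult_assoc, Rinv_l, Rmult_1_r by lra. lra.
    replace (L * (Gamma (INR n + 2) / M)) with ((L * / M) * Gamma (INR n + 2)) by (field; lra).
    apply Rmult_le_compat_r; lra. }
  assert (L * / M * Gamma (INR n + 2) <= G2 / 2 * Gamma (INR n + 2)) by (apply Rmult_le_compat_r; lra).
  nra. Qed.

Definition Ent (c : nat -> C) : Prop := forall r, 0 < r -> exists K, forall n, Cmod (c n) <= K * r ^ n.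

Lemma Series_zero : Series (fun _ => 0) = 0.
Proof. rewrite (Series_ext _ (fun n => 0 * 0 ^ n)) by (intros; ring). rewrite Series_scal_l. ring. Qed.

Lemma ex_series_zero : ex_series (fun _ : nat => 0).
Proof. eapply ex_series_ext with (a := fun n => scal 0 (0 ^ n)).
  intros n. unfold scal; simpl; unfold mult; simpl. ring.
  apply (@ex_series_scal_l R_AbsRing R_NormedModule). apply ex_series_geom. rewrite Rabs_R0; lra. Qed.

Lemma Series_first (a : nat -> R) : (forall n, a (S n) = 0) -> Series a = a 0%nat.
Proof. intros H.
  assert (Hex : ex_series a).
  { apply ex_series_incr_1. eapply ex_series_ext; [|exact ex_series_zero]. intros; simpl; auto. }
  rewrite Series_incr_1 by auto. rewrite (Series_ext _ (fun _ => 0)) by auto. rewrite Series_zero; ring. Qed.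

Lemma ex_series_geom_bound (u : nat -> R) K q : 0 <= q < 1 -> (forall n, Rabs (u n) <= K * q ^ n) -> ex_series u.
Proof. intros Hq Hu. apply (@ex_series_le R_AbsRing R_CompleteNormedModule) with (b := fun n => scal K (q ^ n)).
  intros n. apply Hu. apply (@ex_series_scal_l R_AbsRing R_NormedModule). apply ex_series_geom. rewrite Rabs_pos_eq; lra. Qed.

Lemma re_mulR t z : Re (RtoC t * z) = t * Re z.
Proof. destruct z; unfold Re, RtoC; simpl; ring. Qed.
Lemma im_mulR t z : Im (RtoC t * z) = t * Im z.
Proof. destruct z; unfold Im, RtoC; simpl; ring. Qed.

Lemma Ent_geom c t : Ent c -> exists K, forall n, Cmod (RtoC (t ^ n) * c n) <= K * (1/2) ^ n.
Proof. intros He. destruct (He (/ (2 * (Rabs t + 1)))) as [K HK].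
  apply Rinv_0_lt_compat. pose proof (Rabs_pos t). lra.
  exists K. intros n. rewrite Cmod_mult, Cmod_R, <- RPow_abs.
  specialize (HK n).
  assert (HK0 : 0 <= K * (/ (2 * (Rabs t + 1))) ^ n) by (eapply Rle_trans; [apply Cmod_ge_0|exact HK]).
  apply Rle_trans with (Rabs t ^ n * (K * (/ (2 * (Rabs t + 1))) ^ n)).
  apply Rmult_le_compat_l; auto. apply pow_le, Rabs_pos.
  assert (HKp : 0 <= K).
  { assert (0 < (/ (2 * (Rabs t + 1))) ^ n). apply pow_lt. apply Rinv_0_lt_compat. pose proof (Rabs_pos t). lra. nra. }
  replace (Rabs t ^ n * (K * (/ (2 * (Rabs t + 1))) ^ n)) with (K * (Rabs t * / (2 * (Rabs t + 1))) ^ n)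
    by (rewrite Rpow_mult_distr; ring).
  apply Rmult_le_compat_l; auto. apply pow_incr. split.
  apply Rmult_le_pos. apply Rabs_pos. apply Rlt_le, Rinv_0_lt_compat. pose proof (Rabs_pos t). lra.
  apply (Rmult_le_reg_r (2 * (Rabs t + 1))). pose proof (Rabs_pos t). lra.
  rewrite Rmult_assoc, Rinv_l. pose proof (Rabs_pos t). lra. pose proof (Rabs_pos t). lra. Qed.

Lemma Ent_ex_re c t : Ent c -> ex_series (fun n => Re (RtoC (t ^ n) * c n)).
Proof. intros He. destruct (Ent_geom c t He) as [K HK].
  apply ex_series_geom_bound with K (1/2). lra. intros n. eapply Rle_trans. apply re_le_Cmod. auto. Qed.

Lemma im_le_Cmod' (z : C) : Rabs (Im z) <= Cmod z.
Proof. destruct z as [x y]. unfold Cmod, Im; simpl. rewrite <- sqrt_Rsqr_abs.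
  apply sqrt_le_1_alt. unfold Rsqr. pose proof (pow2_ge_0 x). nra. Qed.

Lemma Ent_ex_im c t : Ent c -> ex_series (fun n => Im (RtoC (t ^ n) * c n)).
Proof. intros He. destruct (Ent_geom c t He) as [K HK].
  apply ex_series_geom_bound with K (1/2). lra. intros n. eapply Rle_trans. apply im_le_Cmod'. auto. Qed.

Lemma Ent_conv c : Ent c -> conv_on_nonneg c.
Proof. intros He t _. destruct (Ent_geom c t He) as [K HK].
  apply (@ex_series_le C_AbsRing C_CompleteNormedModule) with (b := fun n => scal K ((1/2) ^ n)).
  intros n. apply HK. apply (@ex_series_scal_l R_AbsRing R_NormedModule). apply ex_series_geom. rewrite Rabs_pos_eq; lra. Qed.

Lemma finite_bound (f : nat -> R) N : exists K, forall n, (n < N)%nat -> f n <= K.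
Proof. induction N. exists 0. intros; lia.
  destruct IHN as [K HK]. exists (Rmax K (f N)). intros n Hn.
  destruct (Nat.eq_dec n N). subst. apply Rmax_r. eapply Rle_trans. apply HK; lia. apply Rmax_l. Qed.

Lemma conv_Ent c : conv_on_nonneg c -> Ent c.
Proof. intros Hc r Hr. assert (Ht : 0 <= / r) by (apply Rlt_le, Rinv_0_lt_compat; auto).
  pose proof (Cauchy_ex_series _ (Hc (/ r) Ht)) as Hca.
  destruct (Hca (mkposreal 1 Rlt_0_1)) as [N HN].
  destruct (finite_bound (fun n => Cmod (c n) / r ^ n) N) as [K HK].
  exists (Rmax K 1). intros n.
  assert (Hrn : 0 < r ^ n) by (apply pow_lt; auto).
  destruct (le_lt_dec N n).
  - specialize (HN n n l l). rewrite sum_n_n in HN. simpl in HN.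
    assert (HN' : Cmod (RtoC ((/ r) ^ n) * c n)%C < 1) by exact HN. clear HN. rename HN' into HN.
    rewrite Cmod_mult, Cmod_R, Rabs_pos_eq in HN by (apply pow_le; auto).
    rewrite pow_inv in HN.
    apply Rle_trans with (1 * r ^ n); [|apply Rmult_le_compat_r; [lra|apply Rmax_r]].
    apply (Rmult_le_reg_l (/ r ^ n)). apply Rinv_0_lt_compat; auto.
    replace (/ r ^ n * (1 * r ^ n)) with 1 by (field; lra). lra.
  - specialize (HK n l). simpl in HK.
    apply Rle_trans with (K * r ^ n); [|apply Rmult_le_compat_r; [lra|apply Rmax_l]].
    apply (Rmult_le_reg_r (/ r ^ n)). apply Rinv_0_lt_compat; auto.
    replace (K * r ^ n * / r ^ n) with K by (field; lra). exact HK. Qed.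

Lemma psum_eq c t : psum c t = (Series (fun n => t ^ n * Re (c n)), Series (fun n => t ^ n * Im (c n))).
Proof. unfold psum, CSeries. f_equal; apply Series_ext; intros n.
  apply re_mulR. apply im_mulR. Qed.

Lemma Ent_ex_re' c t : Ent c -> ex_series (fun n => t ^ n * Re (c n)).
Proof. intros. eapply ex_series_ext; [|apply (Ent_ex_re c t H)]. intros; apply re_mulR. Qed.
Lemma Ent_ex_im' c t : Ent c -> ex_series (fun n => t ^ n * Im (c n)).
Proof. intros. eapply ex_series_ext; [|apply (Ent_ex_im c t H)]. intros; apply im_mulR. Qed.

Lemma psum_plus c d t : Ent c -> Ent d -> psum (fun n => (c n + d n)%C) t = (psum c t + psum d t)%C.
Proof. intros Hc Hd. rewrite !psum_eq. unfold Cplus; simpl. f_equal.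
  - rewrite <- Series_plus by (apply Ent_ex_re'; auto). apply Series_ext; intros n.
    destruct (c n), (d n); unfold Re; simpl; ring.
  - rewrite <- Series_plus by (apply Ent_ex_im'; auto). apply Series_ext; intros n.
    destruct (c n), (d n); unfold Im; simpl; ring. Qed.

Lemma psum_scal (l : C) c t : Ent c -> psum (fun n => (l * c n)%C) t = (l * psum c t)%C.
Proof. intros Hc. rewrite !psum_eq. destruct l as [lr li]. unfold Cmult; simpl. f_equal.
  - rewrite <- !Series_scal_l. unfold Rminus. rewrite <- Series_opp, <- Series_plus.
    apply Series_ext; intros n. destruct (c n); unfold Re, Im; simpl; ring.
    apply (ex_series_scal_l (V := R_NormedModule) lr), Ent_ex_re'; auto.
    apply (ex_series_opp (V := R_NormedModule)). apply (ex_series_scal_l (V := R_NormedModule) li), Ent_ex_im'; auto.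
  - rewrite <- !Series_scal_l. rewrite <- Series_plus.
    apply Series_ext; intros n. destruct (c n); unfold Re, Im; simpl; ring.
    apply (ex_series_scal_l (V := R_NormedModule) lr), Ent_ex_im'; auto.
    apply (ex_series_scal_l (V := R_NormedModule) li), Ent_ex_re'; auto. Qed.

Lemma psum_zero t : psum (fun _ => 0%C) t = 0%C.
Proof. rewrite psum_eq. unfold Re, Im; simpl.
  rewrite (Series_ext _ (fun _ => 0)) by (intros; ring). rewrite Series_zero. reflexivity. Qed.

Lemma psum_at0 c : psum c 0 = c 0%nat.
Proof. rewrite psum_eq. rewrite !Series_first. simpl. destruct (c 0%nat); unfold Re, Im; simpl. f_equal; ring.
  intros; simpl; ring. intros; simpl; ring. Qed.

Lemma sum_zero (f : nat -> R) n : (forall i, (i <= n)%nat -> f i = 0) -> sum_f_R0 f n = 0.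
Proof. induction n; intros H; simpl. apply H; lia. rewrite IHn, H; [ring|lia|]. intros; apply H; lia. Qed.

Lemma ident_R (b : nat -> R) K : (forall n, Rabs (b n) <= K) ->
  (forall t, 0 < t < 1/2 -> Series (fun n => t ^ n * b n) = 0) -> forall n, b n = 0.
Proof. intros HK Hs.
  assert (HK0 : 0 <= K) by (eapply Rle_trans; [apply Rabs_pos|apply (HK 0%nat)]).
  assert (Hex : forall k t, 0 < t < 1/2 -> ex_series (fun n => t ^ n * b (n + k)%nat)).
  { intros k t Ht. apply ex_series_geom_bound with K t. lra. intros n.
    rewrite Rabs_mult, <- RPow_abs, (Rabs_pos_eq t) by lra. rewrite Rmult_comm. apply Rmult_le_compat_r.
    apply pow_le; lra. auto. }
  intros k. induction k as [k IH] using lt_wf_ind.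
  apply Rabs_eq_0. apply Rle_antisym; [|apply Rabs_pos].
  apply Rnot_lt_le. intro Hb.
  set (t := Rmin (1/4) (Rabs (b k) / (4 * K + 4))).
  assert (Ht : 0 < t < 1/2).
  { unfold t. split. apply Rmin_pos. lra. apply Rdiv_lt_0_compat; lra. eapply Rle_lt_trans. apply Rmin_l. lra. }
  assert (H1 : Series (fun n => t ^ n * b (n + k)%nat) = 0).
  { specialize (Hs t Ht). destruct k as [|k'].
    - rewrite <- Hs. apply Series_ext; intros; rewrite Nat.add_0_r; auto.
    - rewrite (Series_incr_n _ (S k')) in Hs by (lia || (apply (ex_series_ext (fun n => t ^ n * b (n + 0)%nat)); [intros; rewrite Nat.add_0_r; auto | apply Hex; auto])).
      rewrite (sum_zero _ (Nat.pred (S k'))) in Hs.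
      2: { intros i Hi. simpl in Hi. rewrite (IH i) by lia. ring. }
      rewrite Rplus_0_l in Hs.
      rewrite (Series_ext _ (fun n => t ^ S k' * (t ^ n * b (n + S k')%nat))) in Hs.
      rewrite Series_scal_l in Hs. apply Rmult_integral in Hs. destruct Hs as [Hs|Hs]; auto.
      apply pow_nonzero in Hs. lra. lra.
      intros n. rewrite (Nat.add_comm (S k') n), pow_add. ring. }
  rewrite Series_incr_1 in H1 by (apply Hex; auto). simpl in H1.
  rewrite Rmult_1_l in H1.
  rewrite (Series_ext _ (fun n => t * (t ^ n * b (n + S k)%nat))) in H1.
  2: { intros n. simpl. replace (S (n + k)) with (n + S k)%nat by lia. ring. }
  rewrite Series_scal_l in H1.
  assert (H2 : Rabs (Series (fun n => t ^ n * b (n + S k)%nat)) <= 2 * K).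
  { eapply Rle_trans. apply Series_Rabs.
    apply ex_series_geom_bound with K t. lra. intros n. rewrite Rabs_Rabsolu.
    rewrite Rabs_mult, <- RPow_abs, (Rabs_pos_eq t) by lra. rewrite Rmult_comm. apply Rmult_le_compat_r.
    apply pow_le; lra. auto.
    apply Rle_trans with (Series (fun n => K * t ^ n)).
    apply Series_le. intros n. split. apply Rabs_pos. rewrite Rabs_mult, <- RPow_abs, (Rabs_pos_eq t) by lra.
    rewrite Rmult_comm. apply Rmult_le_compat_r. apply pow_le; lra. auto.
    apply (ex_series_scal_l (V := R_NormedModule) K), ex_series_geom. rewrite Rabs_pos_eq; lra.
    rewrite Series_scal_l, Series_geom by (rewrite Rabs_pos_eq; lra).
    rewrite (Rmult_comm 2 K). apply Rmult_le_compat_l; auto. replace 2 with (/ (1/2)) by field.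
    apply Rinv_le_contravar; lra. }
  assert (H3 : Rabs (b k) <= t * (2 * K)).
  { replace (b k) with (- (t * Series (fun n => t ^ n * b (n + S k)%nat))) by lra.
    rewrite Rabs_Ropp, Rabs_mult, Rabs_pos_eq by lra. apply Rmult_le_compat_l; lra. }
  assert (t <= Rabs (b k) / (4 * K + 4)) by apply Rmin_r.
  assert (t * (4 * K + 4) <= Rabs (b k)).
  { apply (Rmult_le_compat_r (4 * K + 4)) in H. unfold Rdiv in H. rewrite Rmult_assoc, Rinv_l in H; lra. lra. }
  nra. Qed.

Lemma ident_C (b : nat -> C) : Ent b -> (forall t, 0 <= t -> psum b t = 0%C) -> forall n, b n = 0%C.
Proof. intros He Hs. destruct (He 1 Rlt_0_1) as [K HK].
  assert (HK' : forall n, Cmod (b n) <= K) by (intros n; specialize (HK n); rewrite pow1, Rmult_1_r in HK; auto).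
  assert (Hr : forall n, Re (b n) = 0).
  { apply (ident_R _ K). intros; eapply Rle_trans; [apply re_le_Cmod|auto].
    intros t Ht. specialize (Hs t ltac:(lra)). rewrite psum_eq in Hs. injection Hs; auto. }
  assert (Hi : forall n, Im (b n) = 0).
  { apply (ident_R _ K). intros; eapply Rle_trans; [apply im_le_Cmod'|auto].
    intros t Ht. specialize (Hs t ltac:(lra)). rewrite psum_eq in Hs. injection Hs; auto. }
  intros n. specialize (Hr n). specialize (Hi n). destruct (b n); unfold Re, Im in *; simpl in *. subst; auto. Qed.

Fixpoint Pk (alpha : R) (k n : nat) : R :=
  match k with O => 1 | S k' => gcoef alpha n * Pk alpha k' (S n) end.

Lemma LD_eq alpha c n : LD alpha c n = (RtoC (gcoef alpha n) * c (S n))%C.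
Proof. reflexivity. Qed.

Lemma LDk_S alpha k c : LDk alpha (S k) c = LD alpha (LDk alpha k c).
Proof. reflexivity. Qed.

Lemma LDk_P alpha k : forall c n, LDk alpha k c n = (RtoC (Pk alpha k n) * c (n + k)%nat)%C.
Proof. induction k; intros c n.
  - unfold LDk; simpl. rewrite Nat.add_0_r. ring.
  - rewrite LDk_S, LD_eq, IHk. simpl Pk. rewrite RtoC_mult.
    replace (S n + k)%nat with (n + S k)%nat by lia. ring. Qed.

Lemma Pk_pos alpha k : 0 < alpha < 1 -> forall n, 0 < Pk alpha k n.
Proof. intros Ha. induction k; intros n; simpl. lra. apply Rmult_lt_0_compat; auto. apply gcoef_pos; auto. Qed.

Lemma Pk_succ alpha k : forall n, Pk alpha (S k) n = Pk alpha k n * gcoef alpha (n + k).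
Proof. induction k; intros n. simpl. rewrite Nat.add_0_r. ring.
  change (Pk alpha (S (S k)) n) with (gcoef alpha n * Pk alpha (S k) (S n)).
  rewrite IHk. simpl. replace (S (n + k)) with (n + S k)%nat by lia. ring. Qed.

Lemma RtoC_neq0 x : x <> 0 -> RtoC x <> 0%C.
Proof. intros H H'. apply H. injection H'. auto. Qed.

Lemma LDk_lin alpha k (l mu : C) c d n :
  LDk alpha k (fun n => (l * c n + mu * d n)%C) n = (l * LDk alpha k c n + mu * LDk alpha k d n)%C.
Proof. rewrite !LDk_P. ring. Qed.

Lemma Ent_plus c d : Ent c -> Ent d -> Ent (fun n => (c n + d n)%C).
Proof. intros Hc Hd r Hr. destruct (Hc r Hr) as [K1 H1]. destruct (Hd r Hr) as [K2 H2].
  exists (K1 + K2). intros n. eapply Rle_trans. apply Cmod_triangle. specialize (H1 n). specialize (H2 n). lra. Qed.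

Lemma Ent_scal (l : C) c : Ent c -> Ent (fun n => (l * c n)%C).
Proof. intros Hc r Hr. destruct (Hc r Hr) as [K H]. exists (Cmod l * K). intros n.
  rewrite Cmod_mult, Rmult_assoc. apply Rmult_le_compat_l. apply Cmod_ge_0. auto. Qed.

Lemma Ent_zero : Ent (fun _ => 0%C).
Proof. intros r Hr. exists 0. intros n. rewrite Cmod_0. lra. Qed.

Lemma Ent_LD alpha c : 0 < alpha < 1 -> Ent c -> Ent (LD alpha c).
Proof. intros Ha Hc r Hr. destruct (gcoef_bound alpha Ha) as [A [B [HA [HB HAB]]]].
  destruct (Hc (r / B)) as [K HK]. apply Rdiv_lt_0_compat; auto.
  exists (A * K * (r / B)). intros n. rewrite LD_eq, Cmod_mult, Cmod_R.
  rewrite Rabs_pos_eq by (apply Rlt_le, gcoef_pos; auto).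
  specialize (HK (S n)). specialize (HAB n).
  assert (0 <= K * (r / B) ^ S n) by (eapply Rle_trans; [apply Cmod_ge_0|exact HK]).
  apply Rle_trans with (A * B ^ n * (K * (r / B) ^ S n)).
  apply Rmult_le_compat; auto. apply Rlt_le, gcoef_pos; auto. apply Cmod_ge_0.
  unfold Rdiv. rewrite Rpow_mult_distr, pow_inv. simpl. right. field. split. lra. apply pow_nonzero. lra. Qed.

Lemma Ent_LDk alpha k c : 0 < alpha < 1 -> Ent c -> Ent (LDk alpha k c).
Proof. intros Ha Hc. induction k. exact Hc. rewrite LDk_S. apply Ent_LD; auto. Qed.

Definition fsum (f : nat -> C) (l : list nat) : C := fold_right Cplus 0%C (map f l).

Definition RE alpha m a c n : C :=
  (LDk alpha m c n + fsum (fun j => a j * LDk alpha j c n) (seq 0 m))%C.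

Lemma fsum_lin (f g : nat -> C) (l mu : C) L :
  fsum (fun j => l * f j + mu * g j)%C L = (l * fsum f L + mu * fsum g L)%C.
Proof. induction L; unfold fsum in *; simpl. ring. rewrite IHL. ring. Qed.

Lemma fsum_ext (f g : nat -> C) L : (forall j, In j L -> f j = g j) -> fsum f L = fsum g L.
Proof. intros H. unfold fsum. f_equal. apply map_ext_in. auto. Qed.

Lemma RE_lin alpha m a (l mu : C) c d n :
  RE alpha m a (fun n => (l * c n + mu * d n)%C) n = (l * RE alpha m a c n + mu * RE alpha m a d n)%C.
Proof. unfold RE. rewrite LDk_lin.
  rewrite (fsum_ext _ (fun j => l * (a j * LDk alpha j c n) + mu * (a j * LDk alpha j d n))%C).
  rewrite fsum_lin. ring. intros j _. rewrite LDk_lin. ring. Qed.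

Lemma psum_fsum (h : nat -> nat -> C) (a : nat -> C) L t : (forall j, Ent (h j)) ->
  Ent (fun n => fsum (fun j => a j * h j n)%C L) /\
  fsum (fun j => a j * psum (h j) t)%C L = psum (fun n => fsum (fun j => a j * h j n)%C L) t.
Proof. intros Hh. induction L; unfold fsum in *; simpl.
  - split. apply Ent_zero. rewrite psum_zero. auto.
  - destruct IHL as [IH1 IH2]. split.
    + apply Ent_plus; auto. apply Ent_scal; auto.
    + rewrite psum_plus; auto. rewrite psum_scal, IH2; auto. apply Ent_scal; auto. Qed.

Lemma sol_iff alpha m a c : 0 < alpha < 1 ->
  (IsSolution alpha m a c <-> (Ent c /\ forall n, RE alpha m a c n = 0%C)).
Proof. intros Ha.
  assert (Key : Ent c -> Ent (RE alpha m a c) /\ forall t,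
     (psum (LDk alpha m c) t + fold_right Cplus 0%C (map (fun j => a j * psum (LDk alpha j c) t) (seq 0 m)))%C
     = psum (RE alpha m a c) t).
  { intros Hc. destruct (psum_fsum (fun j => LDk alpha j c) a (seq 0 m) 0) as [HE _].
    intros; apply Ent_LDk; auto. split.
    - apply Ent_plus; auto. apply Ent_LDk; auto.
    - intros t. destruct (psum_fsum (fun j => LDk alpha j c) a (seq 0 m) t) as [_ Hs].
      intros; apply Ent_LDk; auto. change (fold_right Cplus 0%C (map (fun j => a j * psum (LDk alpha j c) t) (seq 0 m)))%C
        with (fsum (fun j => a j * psum (LDk alpha j c) t)%C (seq 0 m)).
      rewrite Hs. unfold RE. rewrite psum_plus; auto. apply Ent_LDk; auto. }
  split.
  - intros [Hconv Heq]. assert (Hc : Ent c) by (apply conv_Ent; auto). split; auto.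
    destruct (Key Hc) as [HE Hk]. apply ident_C; auto. intros t Ht. rewrite <- Hk. auto.
  - intros [Hc Hr]. split. apply Ent_conv; auto. intros t Ht. destruct (Key Hc) as [_ Hk]. rewrite Hk.
    rewrite (functional_extensionality (RE alpha m a c) (fun _ => 0%C) Hr). apply psum_zero. Qed.

Lemma init_val_eq alpha k c : init_val alpha k c = (RtoC (Pk alpha k 0) * c k)%C.
Proof. unfold init_val. rewrite psum_at0, LDk_P. auto. Qed.

Definition newval (alpha : R) (m : nat) (a : nat -> C) (n : nat) (w : nat -> C) : C :=
  (- fsum (fun j => a j * (RtoC (Pk alpha j n) * w j)) (seq 0 m) / RtoC (Pk alpha m n))%C.

Fixpoint W (alpha : R) (m : nat) (a : nat -> C) (v : nat -> C) (n : nat) : nat -> C :=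
  match n with
  | O => fun j => (v j / RtoC (Pk alpha j 0))%C
  | S n' => fun j => if Nat.ltb (j + 1) m then W alpha m a v n' (j + 1) else newval alpha m a n' (W alpha m a v n')
  end.

Definition cseq (alpha : R) (m : nat) (a : nat -> C) (v : nat -> C) (n : nat) : C := W alpha m a v n 0.

Lemma W_shift alpha m a v : forall j n, (j < m)%nat -> W alpha m a v n j = cseq alpha m a v (n + j).
Proof. induction j; intros n Hj. unfold cseq. rewrite Nat.add_0_r. auto.
  replace (S j) with (j + 1)%nat by lia.
  assert (H : W alpha m a v (S n) j = W alpha m a v n (j + 1)).
  { simpl. destruct (Nat.ltb_spec (j + 1) m). auto. lia. }
  rewrite <- H, IHj by lia. f_equal. lia. Qed.

Lemma c_rec alpha m a v n : (1 <= m)%nat -> cseq alpha m a v (n + m) = newval alpha m a n (W alpha m a v n).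
Proof. intros Hm. replace (n + m)%nat with (S n + (m - 1))%nat by lia.
  rewrite <- W_shift by lia. simpl. destruct (Nat.ltb_spec (m - 1 + 1) m). lia. auto. Qed.

Lemma fsum_Cmod (f : nat -> C) L : Cmod (fsum f L) <= fold_right Rplus 0 (map (fun j => Cmod (f j)) L).
Proof. induction L; unfold fsum in *; simpl. rewrite Cmod_0; lra.
  eapply Rle_trans. apply Cmod_triangle. lra. Qed.

Lemma rsum_le (f g : nat -> R) L : (forall j, In j L -> f j <= g j) ->
  fold_right Rplus 0 (map f L) <= fold_right Rplus 0 (map g L).
Proof. induction L; simpl; intros H. lra. apply Rplus_le_compat. apply H; auto. apply IHL; auto. Qed.

Lemma rsum_scal (f : nat -> R) z L : fold_right Rplus 0 (map (fun j => f j * z) L) = fold_right Rplus 0 (map f L) * z.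
Proof. induction L; simpl. ring. rewrite IHL. ring. Qed.

Lemma rsum_nonneg (f : nat -> R) L : (forall j, 0 <= f j) -> 0 <= fold_right Rplus 0 (map f L).
Proof. induction L; simpl; intros H. lra. pose proof (H a). pose proof (IHL H). lra. Qed.

Lemma fsum_zero (f : nat -> C) L : (forall j, In j L -> f j = 0%C) -> fsum f L = 0%C.
Proof. induction L; unfold fsum in *; simpl; intros H. auto. rewrite H, IHL; auto. ring. Qed.

Lemma pow_le1 r j : 0 <= r <= 1 -> r ^ j <= 1.
Proof. intros H. induction j; simpl. lra. assert (0 <= r ^ j) by (apply pow_le; lra). nra. Qed.

Lemma Pk_mono alpha L n : 0 < alpha < 1 -> 1 <= L -> (forall k, (n <= k)%nat -> L <= gcoef alpha k) ->
  forall j k, (j <= k)%nat -> Pk alpha j n * L ^ (k - j) <= Pk alpha k n.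
Proof. intros Ha HL Hg j k Hjk. induction k.
  - assert (j = 0)%nat by lia. subst. simpl. lra.
  - destruct (Nat.eq_dec j (S k)). subst. rewrite Nat.sub_diag. simpl. lra.
    rewrite Pk_succ. replace (S k - j)%nat with (S (k - j)) by lia. simpl.
    specialize (IHk ltac:(lia)). pose proof (Hg (n + k)%nat ltac:(lia)).
    pose proof (Pk_pos alpha j Ha n). assert (0 <= L ^ (k - j)) by (apply pow_le; lra).
    apply Rle_trans with (Pk alpha j n * L ^ (k - j) * L). right; ring.
    apply Rmult_le_compat; try lra. apply Rmult_le_pos; lra. Qed.

Lemma cseq_Ent alpha m a v : 0 < alpha < 1 -> (1 <= m)%nat -> Ent (cseq alpha m a v).
Proof. intros Ha Hm.
  set (c := cseq alpha m a v).
  set (SA := fold_right Rplus 0 (map (fun j => Cmod (a j)) (seq 0 m))).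
  assert (HSA : 0 <= SA) by (apply rsum_nonneg; intros; apply Cmod_ge_0).
  assert (Main : forall r, 0 < r <= 1 -> exists K, forall n, Cmod (c n) <= K * r ^ n).
  { intros r Hr.
    assert (Hrm : 0 < r ^ m) by (apply pow_lt; lra).
    set (L := 1 + SA / r ^ m).
    assert (HL1 : 1 <= L) by (unfold L; assert (0 <= SA / r ^ m) by (apply Rdiv_le_0_compat; lra); lra).
    assert (HLS : SA <= L * r ^ m).
    { unfold L. rewrite Rmult_plus_distr_r. unfold Rdiv. rewrite Rmult_assoc, Rinv_l, Rmult_1_r by lra.
      lra. }
    destruct (gcoef_inf alpha Ha L) as [N HN].
    destruct (finite_bound (fun n => Cmod (c n) / r ^ n) (N + m)) as [K0 HK0].
    set (K := Rmax K0 0). assert (HK : 0 <= K) by apply Rmax_r.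
    exists K. intros k. induction k as [k IH] using lt_wf_ind.
    assert (Hrk : 0 < r ^ k) by (apply pow_lt; lra).
    destruct (lt_dec k (N + m)) as [Hk|Hk].
    - specialize (HK0 k Hk). simpl in HK0.
      apply (Rmult_le_reg_r (/ r ^ k)). apply Rinv_0_lt_compat; auto.
      replace (K * r ^ k * / r ^ k) with K by (field; lra).
      eapply Rle_trans. apply HK0. apply Rmax_l.
    - destruct (Nat.le_exists_sub m k) as [n [Hkn _]]. lia. subst k.
      assert (HnN : (N <= n)%nat) by lia.
      unfold c. rewrite c_rec by auto. fold c.
      assert (Hg : forall k, (n <= k)%nat -> L <= gcoef alpha k) by (intros; apply HN; lia).
      assert (HPm : 0 < Pk alpha m n) by (apply Pk_pos; auto).
      assert (HPj : forall j, (j < m)%nat -> Pk alpha j n <= Pk alpha m n / L).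
      { intros j Hj. pose proof (Pk_mono alpha L n Ha HL1 Hg j m ltac:(lia)).
        assert (L <= L ^ (m - j)).
        { replace (m - j)%nat with (S (m - j - 1)) by lia. simpl.
          assert (1 <= L ^ (m - j - 1)) by (apply pow_R1_Rle; lra). nra. }
        pose proof (Pk_pos alpha j Ha n).
        apply (Rmult_le_reg_r L). lra. unfold Rdiv. rewrite Rmult_assoc, Rinv_l, Rmult_1_r by lra. nra. }
      assert (Hrn : 0 < r ^ n) by (apply pow_lt; lra).
      assert (Hw : forall j, In j (seq 0 m) -> Cmod (a j * (RtoC (Pk alpha j n) * W alpha m a v n j)) <= Cmod (a j) * (Pk alpha m n / L * (K * r ^ n))).
      { intros j Hj. apply in_seq in Hj.
        rewrite !Cmod_mult, Cmod_R, Rabs_pos_eq by (apply Rlt_le, Pk_pos; auto).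
        rewrite W_shift by lia. fold c.
        apply Rmult_le_compat_l. apply Cmod_ge_0.
        apply Rmult_le_compat. apply Rlt_le, Pk_pos; auto. apply Cmod_ge_0. apply HPj; lia.
        eapply Rle_trans. apply IH. lia. apply Rmult_le_compat_l; auto.
        rewrite pow_add. rewrite <- (Rmult_1_r (r ^ n)) at 2. apply Rmult_le_compat_l. lra.
        apply pow_le1. lra. }
      unfold newval. unfold Cdiv. rewrite Cmod_mult, Cmod_opp, Cmod_inv, Cmod_R, Rabs_pos_eq by (try apply RtoC_neq0; lra).
      eapply Rle_trans. apply Rmult_le_compat_r. apply Rlt_le, Rinv_0_lt_compat; auto.
      eapply Rle_trans. apply fsum_Cmod. apply rsum_le. exact Hw.
      rewrite rsum_scal. fold SA.
      apply Rle_trans with (SA * (K * r ^ n) / L).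
      right. field. split; lra.
      apply (Rmult_le_reg_r L). lra. unfold Rdiv. rewrite Rmult_assoc, Rinv_l, Rmult_1_r by lra.
      rewrite pow_add.
      assert (0 <= K * r ^ n) by (apply Rmult_le_pos; lra).
      apply Rle_trans with (L * r ^ m * (K * r ^ n)). apply Rmult_le_compat_r; auto.
      right; ring. }
  intros r Hr. destruct (Main (Rmin r 1)) as [K HK].
  split. apply Rmin_pos; lra. apply Rmin_r.
  exists (Rmax K 0). intros n. eapply Rle_trans. apply HK.
  assert (0 <= Rmin r 1) by (apply Rlt_le, Rmin_pos; lra).
  apply Rle_trans with (Rmax K 0 * Rmin r 1 ^ n).
  apply Rmult_le_compat_r. apply pow_le; auto. apply Rmax_l.
  apply Rmult_le_compat_l. apply Rmax_r. apply pow_incr. split; auto. apply Rmin_l. Qed.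

Lemma Cmult_reg (p x y : C) : p <> 0%C -> (p * x = p * y)%C -> x = y.
Proof. intros Hp H. transitivity (/ p * (p * x))%C. field; auto. rewrite H. field; auto. Qed.

Lemma RE_cseq alpha m a v n : 0 < alpha < 1 -> (1 <= m)%nat -> RE alpha m a (cseq alpha m a v) n = 0%C.
Proof. intros Ha Hm. unfold RE. rewrite LDk_P, c_rec by auto.
  rewrite (fsum_ext _ (fun j => a j * (RtoC (Pk alpha j n) * W alpha m a v n j))%C).
  unfold newval. field. apply RtoC_neq0. apply Rgt_not_eq, Pk_pos; auto.
  intros j Hj. apply in_seq in Hj. rewrite LDk_P, W_shift by lia. auto. Qed.

Theorem mainTheorem16 (alpha : R) (m : nat) (a : nat -> C) :
  0 < alpha < 1 -> (1 <= m)%nat ->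
  (* S is a complex vector space (a subspace of the coefficient sequences) *)
  IsSolution alpha m a (fun _ => 0%C) /\
  (forall c d, IsSolution alpha m a c -> IsSolution alpha m a d ->
     IsSolution alpha m a (fun n => (c n + d n)%C)) /\
  (forall (l : C) c, IsSolution alpha m a c ->
     IsSolution alpha m a (fun n => (l * c n)%C)) /\
  (* the map x |-> (x(0), LD^alpha x(0), ..., LD^{(m-1) o alpha} x(0)) is C-linear on S *)
  (forall (l mu : C) c d, IsSolution alpha m a c -> IsSolution alpha m a d ->
     forall k, (k < m)%nat ->
       init_val alpha k (fun n => (l * c n + mu * d n)%C)
       = (l * init_val alpha k c + mu * init_val alpha k d)%C) /\
  (* ... surjective onto C^m ... *)
  (forall v : nat -> C, exists c, IsSolution alpha m a c /\
     forall k, (k < m)%nat -> init_val alpha k c = v k) /\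
  (* ... and injective on S; hence an isomorphism S ~ C^m and dim S = m *)
  (forall c d, IsSolution alpha m a c -> IsSolution alpha m a d ->
     (forall k, (k < m)%nat -> init_val alpha k c = init_val alpha k d) -> c = d).
Proof.
  intros Ha Hm.
  assert (Lin : forall (l mu : C) c d, IsSolution alpha m a c -> IsSolution alpha m a d ->
     IsSolution alpha m a (fun n => (l * c n + mu * d n)%C)).
  { intros l mu c d Hc Hd. apply sol_iff in Hc; auto. apply sol_iff in Hd; auto. apply sol_iff; auto.
    destruct Hc as [Hc1 Hc2]. destruct Hd as [Hd1 Hd2]. split.
    apply Ent_plus; apply Ent_scal; auto.
    intros n. rewrite RE_lin, Hc2, Hd2. ring. }
  assert (Z : IsSolution alpha m a (fun _ => 0%C)).
  { apply sol_iff; auto. split. apply Ent_zero. intros n.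
    set (c0 := (fun _ : nat => RtoC 0) : nat -> C).
    assert (Hc0 : c0 = (fun n => (RtoC 0 * c0 n + RtoC 0 * c0 n)%C)).
    { apply functional_extensionality. intros; unfold c0. ring. }
    rewrite Hc0, RE_lin. ring. }
  split; [exact Z|]. split.
  { intros c d Hc Hd. rewrite (functional_extensionality (fun n => (c n + d n)%C) (fun n => (1 * c n + 1 * d n)%C))
      by (intros; ring). apply Lin; auto. }
  split.
  { intros l c Hc. rewrite (functional_extensionality (fun n => (l * c n)%C) (fun n => (l * c n + 0 * c n)%C))
      by (intros; ring). apply Lin; auto. }
  split.
  { intros l mu c d _ _ k _. rewrite !init_val_eq. ring. }
  split.
  { intros v. exists (cseq alpha m a v). split.
    - apply sol_iff; auto. split. apply cseq_Ent; auto. intros; apply RE_cseq; auto.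
    - intros k Hk. rewrite init_val_eq.
      replace (cseq alpha m a v k) with (W alpha m a v 0 k) by (rewrite W_shift; auto). simpl.
      field. apply RtoC_neq0. apply Rgt_not_eq, Pk_pos; auto. }
  { intros c d Hc Hd Hi.
    set (e := fun n => (1 * c n + (-1) * d n)%C).
    assert (He : IsSolution alpha m a e) by (apply Lin; auto).
    apply sol_iff in He; auto. destruct He as [_ He].
    assert (Hz : forall k, e k = 0%C).
    { intros k. induction k as [k IH] using lt_wf_ind.
      destruct (lt_dec k m) as [Hk|Hk].
      - specialize (Hi k Hk). rewrite !init_val_eq in Hi.
        assert (Hp : RtoC (Pk alpha k 0) <> 0%C) by (apply RtoC_neq0, Rgt_not_eq, Pk_pos; auto).
        apply (Cmult_reg (RtoC (Pk alpha k 0))); auto. unfold e.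
        replace (RtoC (Pk alpha k 0) * (1 * c k + -1 * d k))%C with (RtoC (Pk alpha k 0) * c k - RtoC (Pk alpha k 0) * d k)%C by ring.
        rewrite Hi. ring.
      - destruct (Nat.le_exists_sub m k) as [n [Hkn _]]. lia. subst k.
        specialize (He n). unfold RE in He. rewrite fsum_zero in He.
        2: { intros j Hj. apply in_seq in Hj. rewrite LDk_P, IH by lia. ring. }
        rewrite LDk_P in He.
        assert (Hp : RtoC (Pk alpha m n) <> 0%C) by (apply RtoC_neq0, Rgt_not_eq, Pk_pos; auto).
        apply (Cmult_reg (RtoC (Pk alpha m n))); auto.
        rewrite Cplus_0_r in He. rewrite He. ring. }
    apply functional_extensionality. intros n. specialize (Hz n). unfold e in Hz.
    transitivity ((1 * c n + -1 * d n) + d n)%C. ring. rewrite Hz. ring. }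
Qed.
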